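(* Let $q=p^{m_0}$ with $p$ prime, let $R$ be a commutative ring of characteristic $p$, and let $\rho$ be a permutation of $\{0,1,2,\ldots\}$. The $R$-linear map $\rho_\ast:R\{\{u\}\}\to R\{\{u\}\}$ defined by $$\rho_\ast\Big(\sum_{i\ge0}a_i\frac{u^i}{i!}\Big):=\sum_{i\ge0}a_i\frac{u^{\rho_\ast i}}{(\rho_\ast i)!}$$ is an $R$-algebra automorphism of $R\{\{u\}\}$.
   Context: For a nonnegative integer $i=\sum_j c_jq^j$ ($0\le c_j<q$), $\rho_\ast i:=\sum_j c_jq^{\rho(j)}$; $i\mapsto\rho_\ast i$ is a bijection of the nonnegative integers. $R\{\{u\}\}$ is the $R$-algebra of formal divided power series $\sum_{i\ge0}a_i\frac{u^i}{i!}$ ($a_i\in R$), where $\frac{u^i}{i!}$ are formal symbols, addition is coefficientwise, and multiplication is determined by $\frac{u^i}{i!}\cdot\frac{u^j}{j!}=\binom{i+j}{i}\frac{u^{i+j}}{(i+j)!}$. *)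

(* Defs.v *)
From mathcomp Require Import all_boot all_algebra.
Set Implicit Arguments. Unset Strict Implicit. Unset Printing Implicit Defensive.
Import GRing.Theory.
Local Open Scope ring_scope.

(* Formal divided power series R{{u}}: sum_i a_i u^i/i! is represented by
   its coefficient sequence a : nat -> R. *)
Definition dps (R : comNzRingType) := nat -> R.

Definition dps_add (R : comNzRingType) (a b : dps R) : dps R := fun n => a n + b n.
Definition dps_scale (R : comNzRingType) (c : R) (a : dps R) : dps R := fun n => c * a n.
Definition dps_one (R : comNzRingType) : dps R := fun n => (n == 0%N)%:R.
(* (u^i/i!)(u^j/j!) = C(i+j,i) u^(i+j)/(i+j)! *)
Definition dps_mul (R : comNzRingType) (a b : dps R) : dps R :=
  fun n => \sum_(i < n.+1) ('C(n, i))%:R * a i * b (n - i)%N.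

(* base-q digit c_j of i, and rho_* i = sum_j c_j q^(rho j).
   For q >= 2 all digits at positions j > i vanish, so summing over j <= i
   covers every digit. *)
Definition digit (q i j : nat) : nat := (i %/ q ^ j) %% q.
Definition rho_star (q : nat) (rho : nat -> nat) (i : nat) : nat :=
  \sum_(j < i.+1) digit q i j * q ^ (rho j).

(* F is the map sum a_i u^i/i! |-> sum a_i u^(rho_* i)/(rho_* i)! *)
Definition is_rho_map (R : comNzRingType) (q : nat) (rho : nat -> nat)
  (F : dps R -> dps R) : Prop :=
  forall a i, F a (rho_star q rho i) = a i.

Definition is_Ralg_automorphism (R : comNzRingType) (F : dps R -> dps R) : Prop :=
  [/\ forall a b, F (dps_add a b) = dps_add (F a) (F b),
      forall c a, F (dps_scale c a) = dps_scale c (F a),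
      forall a b, F (dps_mul a b) = dps_mul (F a) (F b),
      F (dps_one R) = dps_one R
    & bijective F].

(* Main.v *)
Require Import Defs.
From mathcomp Require Import all_boot all_algebra.
From Stdlib Require Import FunctionalExtensionality.
Set Implicit Arguments. Unset Strict Implicit. Unset Printing Implicit Defensive.
Import GRing.Theory.
Local Open Scope ring_scope.

Lemma coef_1X (R : comNzRingType) n k :
  ((1 + 'X : {poly R}) ^+ n)`_k = ('C(n, k))%:R.
Proof.
rewrite addrC exprD1n coef_sum.
transitivity (\sum_(i < n.+1 | i == k :> nat) (1 *+ 'C(n,i) : R)).
  rewrite [RHS]big_mkcond /=; apply: eq_bigr => i _; rewrite coefMn coefXn eq_sym; case: (_ == _) => /=; by rewrite ?mul0rn.
rewrite (big_ord1_eq _ (fun j => (1 *+ 'C(n,j) : R))); case: ltnP => // H; by rewrite bin_small.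
Qed.

Lemma frob_1X (R : comNzRingType) p m0 : prime p -> p \in [pchar R] ->
  (1 + 'X : {poly R}) ^+ (p ^ m0) = 1 + 'X^(p ^ m0).
Proof.
move=> pp pc; rewrite exprDn_pchar ?expr1n //.
rewrite pnatX (pnatE _ pp) pchar_poly pc //.
Qed.

Lemma lucas1 (R : comNzRingType) p m0 a b c d : prime p -> p \in [pchar R] ->
  (a < p ^ m0)%N -> (c < p ^ m0)%N ->
  ('C(b * p ^ m0 + a, d * p ^ m0 + c))%:R = ('C(a, c))%:R * ('C(b, d))%:R :> R.
Proof.
move=> pp pc ha hc; set q := (p ^ m0)%N in ha hc *.
have q0 : (0 < q)%N by rewrite expn_gt0 prime_gt0.
rewrite -!(coef_1X R) exprD mulnC exprM frob_1X //.
have -> : (1 + 'X^q : {poly R}) ^+ b = ((1 + 'X) ^+ b) \Po 'X^q.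
  by rewrite rmorphXn rmorphD rmorph1 /= comp_polyX.
rewrite mulrC coefM.
have hck : (c < (d * q + c).+1)%N by rewrite ltnS leq_addl.
rewrite (bigD1 (Ordinal hck)) //= big1 ?addr0.
  by rewrite coef_comp_poly_Xn // addnK dvdn_mull // mulnK.
move=> j /eqP neq.
case: (ltnP a j) => hj.
  by rewrite coef_1X bin_small // mul0r.
rewrite coef_comp_poly_Xn //.
case: ifP => hdv; last by rewrite mulr0.
exfalso; apply: neq; apply: val_inj => /=.
have jk : (j <= d * q + c)%N by rewrite -ltnS ltn_ord.
move: hdv; rewrite -(eqn_mod_dvd _ jk) modnMDl modn_small // modn_small.
  by move/eqP.
by apply: leq_ltn_trans hj ha.
Qed.

Lemma digitS q n j : digit q n j.+1 = digit q (n %/ q) j.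
Proof. by rewrite /digit expnS divnMA. Qed.

Lemma digit0 q n : digit q n 0 = (n %% q)%N.
Proof. by rewrite /digit expn0 divn1. Qed.

Lemma lucas (R : comNzRingType) p m0 M n k : prime p -> p \in [pchar R] ->
  (n < (p ^ m0) ^ M)%N -> (k < (p ^ m0) ^ M)%N ->
  ('C(n, k))%:R = \prod_(j < M) ('C(digit (p ^ m0) n j, digit (p ^ m0) k j))%:R :> R.
Proof.
move=> pp pc; set q := (p ^ m0)%N.
have q0 : (0 < q)%N by rewrite expn_gt0 prime_gt0.
elim: M n k => [|M IH] n k.
  by rewrite big_ord0 expn0 !ltnS !leqn0 => /eqP -> /eqP ->; rewrite bin0.
move=> hn hk; rewrite big_ord_recl /= !digit0.
under eq_bigr do rewrite !digitS.
rewrite -IH; last 2 first.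
- by rewrite ltn_divLR // -expnSr.
- by rewrite ltn_divLR // -expnSr.
rewrite {1}(divn_eq n q) {1}(divn_eq k q) lucas1 ?ltn_pmod //.

Qed.

Local Close Scope ring_scope.

Lemma big_ext_range (R : Type) (idx : R) (op : Monoid.law idx) (F : nat -> R) A C :
  A <= C -> (forall k, A <= k -> F k = idx) ->
  \big[op/idx]_(k < A) F k = \big[op/idx]_(k < C) F k.
Proof.
move=> hAC H; rewrite (big_ord_widen _ _ hAC) big_mkcond; apply: eq_bigr => i _.
by case: ltnP => // h; rewrite H.
Qed.

Lemma big_bij_reindex (R : Type) (idx : R) (op : Monoid.com_law idx)
  (f g : nat -> nat) (fK : cancel f g) (gK : cancel g f) (F : nat -> R) A B :
  (forall k, A <= k -> F k = idx) -> (forall i, B <= i -> F (f i) = idx) ->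
  \big[op/idx]_(i < B) F (f i) = \big[op/idx]_(k < A) F k.
Proof.
move=> HA HB.
set C := maxn A (\max_(i < B) (f i).+1).
rewrite (big_ext_range _ (leq_maxl A (\max_(i < B) (f i).+1)) HA).
rewrite -!(big_mkord xpredT) -(big_mkord xpredT (fun i => F (f i))) /index_iota !subn0 -/C.
rewrite -(big_map f xpredT F).

set s := map f (iota 0 B).
rewrite -(perm_big _ (permEl (perm_filterC (mem s) (iota 0 C)))) big_cat /=.
rewrite [X in op _ X]big1_seq ?Monoid.mulm1; last first.
  move=> k /andP [_]; rewrite mem_filter => /andP [/= kn _].
  case: (ltnP (g k) B) => hk; last by rewrite -(gK k) HB.
  exfalso; move/negP: kn; apply; rewrite -(gK k); apply: map_f.
  by rewrite mem_iota.
apply: perm_big; apply: uniq_perm.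
- by rewrite /s (map_inj_uniq (can_inj fK)) iota_uniq.
- exact: filter_uniq (iota_uniq _ _).
move=> x; rewrite mem_filter; apply/idP/andP => [xs|[] //]; split => //.
move/mapP: xs => [i]; rewrite mem_iota add0n => /andP [_ iB] ->.
rewrite mem_iota add0n /= leq_max; apply/orP; right.
exact: (leq_bigmax (F := fun i : 'I_B => (f i).+1) (Ordinal iB)).
Qed.

Definition num (q : nat) (e : nat -> nat) (K : nat) : nat := \sum_(m < K) e m * q ^ m.

Lemma num_ext q e e' K : (forall m, e m = e' m) -> num q e K = num q e' K.
Proof. by move=> H; apply: eq_bigr => m _; rewrite H. Qed.

Lemma num_rec q e K : num q e K.+1 = e 0 + q * num q (fun m => e m.+1) K.
Proof.
rewrite /num big_ord_recl /= expn0 muln1 big_distrr /=; congr (_ + _).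
by apply: eq_bigr => m _; rewrite expnS mulnCA.
Qed.

Lemma digit_of0 q j : digit q 0 j = 0.
Proof. by rewrite /digit div0n mod0n. Qed.

Lemma digit_num q e K t : 0 < q -> (forall m, e m < q) ->
  digit q (num q e K) t = if t < K then e t else 0.
Proof.
move=> q0; elim: K e t => [|K IH] e t he.
  by rewrite /num big_ord0 digit_of0.
rewrite num_rec; case: t => [|t].
  by rewrite digit0 /= addnC mulnC modnMDl modn_small.
rewrite digitS addnC mulnC divnMDl // divn_small // addn0 IH //.
Qed.

Lemma num_digit q n K : 0 < q -> num q (digit q n) K + q ^ K * (n %/ q ^ K) = n.
Proof.
move=> q0; elim: K n => [|K IH] n.
  by rewrite /num big_ord0 expn0 mul1n divn1.
rewrite num_rec (num_ext _ _ (fun m => digitS q n m)) digit0.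
rewrite expnS -mulnA divnMA -addnA -mulnDr IH.
by rewrite addnC mulnC -divn_eq.
Qed.

Lemma lt_pow q n j : 1 < q -> n <= j -> n < q ^ j.
Proof. by move=> q1 nj; apply: leq_ltn_trans nj (ltn_expl _ q1). Qed.

Lemma digit_small q n j : n < q ^ j -> digit q n j = 0.
Proof. by move=> h; rewrite /digit divn_small // mod0n. Qed.

Lemma digit_lt q n j : 0 < q -> digit q n j < q.
Proof. by move=> q0; rewrite /digit ltn_pmod. Qed.

Lemma num_digit_big q n K : 1 < q -> n <= K -> num q (digit q n) K = n.
Proof.
move=> q1 nK; have q0 : 0 < q by apply: ltnW.
by rewrite -{2}(num_digit n K q0) divn_small ?muln0 ?addn0 // lt_pow.
Qed.

Lemma digit_ext q a b : 1 < q -> (forall j, digit q a j = digit q b j) -> a = b.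
Proof.
move=> q1 H.
have ha : a <= a + b by rewrite leq_addr.
have hb : b <= a + b by rewrite leq_addl.
rewrite -[LHS](num_digit_big q1 ha) -[RHS](num_digit_big q1 hb).
by apply: num_ext.
Qed.

Lemma num_sub q e e' K : (forall m, e' m <= e m) ->
  num q e K - num q e' K = num q (fun m => e m - e' m) K.
Proof.
move=> H; apply/eqP; rewrite -(eqn_add2r (num q e' K)) subnK.
  by rewrite /num -big_split /=; apply/eqP/eq_bigr => m _; rewrite -mulnDl subnK.
by apply: leq_sum => m _; rewrite leq_mul2r H orbT.
Qed.

Lemma digit_sub q n i : 1 < q -> (forall j, digit q i j <= digit q n j) ->
  forall j, digit q (n - i) j = digit q n j - digit q i j.
Proof.
move=> q1 H j; have q0 : 0 < q by apply: ltnW.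
set K := (n + i + j).+1.
have hn : n <= K by rewrite /K ltnW // ltnS -addnA leq_addr.
have hi : i <= K by rewrite /K ltnW // ltnS addnAC leq_addl.
have En : n - i = num q (fun m => digit q n m - digit q i m) K.
  by rewrite -num_sub // !num_digit_big.
rewrite En digit_num //; last by move=> m; apply: leq_ltn_trans (leq_subr _ _) (digit_lt _ _ q0).
by rewrite /K ltnS leq_addl.
Qed.

Lemma digit_rs q rho rinv i m : 1 < q -> cancel rho rinv -> cancel rinv rho ->
  digit q (rho_star q rho i) m = digit q i (rinv m).
Proof.
move=> q1 rK iK; have q0 : 0 < q by apply: ltnW.
set K := maxn (\max_(j < i.+1) (rho j).+1) m.+1.
have E : rho_star q rho i = num q (fun m => digit q i (rinv m)) K.
  rewrite /rho_star /num.
  rewrite (eq_bigr (fun j : 'I_i.+1 => (fun k => digit q i (rinv k) * q ^ k) (rho j))); last first.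
    by move=> j _ /=; rewrite rK.
  apply: (@big_bij_reindex _ _ addn _ _ rK iK (fun k => digit q i (rinv k) * q ^ k) K i.+1) => [k hk|j hj] /=; last first.
    by rewrite rK digit_small ?mul0n // lt_pow // ltnW.
  case: (ltnP (rinv k) i.+1) => h.
    exfalso; move: hk; rewrite /K geq_max => /andP [hk _].
    have := leq_bigmax (F := fun j : 'I_i.+1 => (rho j).+1) (Ordinal h).
    rewrite /= iK => h2; have := leq_trans h2 hk; by rewrite ltnn.
  by rewrite digit_small ?mul0n // lt_pow // ltnW.
rewrite E digit_num //; last by move=> k; apply: digit_lt.
by rewrite /K leq_max ltnSn orbT.
Qed.

Lemma rs_inj q rho rinv : 1 < q -> cancel rho rinv -> cancel rinv rho ->
  injective (rho_star q rho).
Proof.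
move=> q1 rK iK a b E; apply: (digit_ext q1) => j.
by rewrite -(rK j) -!(digit_rs _ _ q1 rK iK) E.
Qed.

Definition rsinv (q : nat) (rho rinv : nat -> nat) (n : nat) : nat :=
  num q (fun j => digit q n (rho j)) (\max_(m < n.+1) (rinv m).+1).

Lemma digit_rsinv q rho rinv n j : 1 < q -> cancel rho rinv -> cancel rinv rho ->
  digit q (rsinv q rho rinv n) j = digit q n (rho j).
Proof.
move=> q1 rK iK; have q0 : 0 < q by apply: ltnW.
rewrite /rsinv digit_num //; last by move=> k; apply: digit_lt.
case: ltnP => // h.
case: (ltnP (rho j) n.+1) => h2.
  have := leq_bigmax (F := fun m : 'I_n.+1 => (rinv m).+1) (Ordinal h2).
  rewrite /= rK => h3; have := leq_trans h3 h; by rewrite ltnn.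
by rewrite digit_small // lt_pow // ltnW.
Qed.

Lemma rs_rsinv q rho rinv n : 1 < q -> cancel rho rinv -> cancel rinv rho ->
  rho_star q rho (rsinv q rho rinv n) = n.
Proof.
move=> q1 rK iK; apply: (digit_ext q1) => m.
by rewrite (digit_rs _ _ q1 rK iK) (digit_rsinv _ _ q1 rK iK) iK.
Qed.

Lemma rsinv_rs q rho rinv i : 1 < q -> cancel rho rinv -> cancel rinv rho ->
  rsinv q rho rinv (rho_star q rho i) = i.
Proof.
move=> q1 rK iK; apply: (rs_inj q1 rK iK).
by rewrite (rs_rsinv _ q1 rK iK).
Qed.

Lemma rs0 q rho rinv : 1 < q -> cancel rho rinv -> cancel rinv rho ->
  rho_star q rho 0 = 0.
Proof.
move=> q1 rK iK; apply: (digit_ext q1) => m.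
by rewrite (digit_rs _ _ q1 rK iK) !digit_of0.
Qed.

Local Open Scope ring_scope.

Lemma q_gt1 p m0 : prime p -> (0 < m0)%N -> (1 < p ^ m0)%N.
Proof.
move=> pp; case: m0 => [//|m] _; rewrite expnS.
apply: leq_trans (prime_gt1 pp) (leq_pmulr _ _).
by rewrite expn_gt0 prime_gt0.
Qed.

Lemma binom_rs (R : comNzRingType) p m0 rho rinv n i :
  prime p -> p \in [pchar R] -> (0 < m0)%N -> cancel rho rinv -> cancel rinv rho ->
  ('C(rho_star (p ^ m0) rho n, rho_star (p ^ m0) rho i))%:R = ('C(n, i))%:R :> R.
Proof.
move=> pp pc m1 rK iK; have q1 := q_gt1 pp m1.
set q := (p ^ m0)%N in q1 *.
set N := rho_star q rho n; set I := rho_star q rho i.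
rewrite (@lucas R p m0 (N + I) N I pp pc); last 2 first.
- by apply: lt_pow => //; rewrite leq_addr.
- by apply: lt_pow => //; rewrite leq_addl.
rewrite (@lucas R p m0 (n + i) n i pp pc); last 2 first.
- by apply: lt_pow => //; rewrite leq_addr.
- by apply: lt_pow => //; rewrite leq_addl.
rewrite -/q.
rewrite (eq_bigr (fun m : 'I_(N + I) =>
   (fun j => ('C(digit q n j, digit q i j))%:R : R) (rinv m))); last first.
  by move=> m _; rewrite /N /I !(digit_rs _ _ q1 rK iK).
apply: (@big_bij_reindex R 1 *%R rinv rho iK rK
   (fun j => ('C(digit q n j, digit q i j))%:R : R) (n + i) (N + I)) => [k hk|m hm] /=.
  by rewrite !digit_small ?bin0 // lt_pow // (leq_trans _ hk) // ?leq_addr ?leq_addl.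
rewrite -!(digit_rs _ _ q1 rK iK) -/N -/I.
by rewrite !digit_small ?bin0 // lt_pow // (leq_trans _ hm) // ?leq_addr ?leq_addl.
Qed.

Lemma term_rs (R : comNzRingType) p m0 rho rinv (a b : nat -> R) n i :
  prime p -> p \in [pchar R] -> (0 < m0)%N -> cancel rho rinv -> cancel rinv rho ->
  ('C(rho_star (p ^ m0) rho n, rho_star (p ^ m0) rho i))%:R
    * a (rsinv (p ^ m0) rho rinv (rho_star (p ^ m0) rho i))
    * b (rsinv (p ^ m0) rho rinv (rho_star (p ^ m0) rho n - rho_star (p ^ m0) rho i)%N)
  = ('C(n, i))%:R * a i * b (n - i)%N.
Proof.
move=> pp pc m1 rK iK; have q1 := q_gt1 pp m1.
rewrite (binom_rs _ _ pp pc m1 rK iK) (rsinv_rs _ q1 rK iK).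
set q := (p ^ m0)%N in q1 *.
case: (boolP [forall j : 'I_(n + i).+1, (digit q i j <= digit q n j)%N]) => H.
  have Hall : forall j, (digit q i j <= digit q n j)%N.
    move=> j; case: (ltnP j (n + i).+1) => hj.
      by have := forallP H (Ordinal hj).
    by rewrite !digit_small // lt_pow // ltnW // (leq_ltn_trans _ hj) // ?leq_addr ?leq_addl.
  have -> : (rho_star q rho n - rho_star q rho i)%N = rho_star q rho (n - i).
    apply: (digit_ext q1) => m.
    rewrite digit_sub //; last by move=> j; rewrite !(digit_rs _ _ q1 rK iK).
    by rewrite !(digit_rs _ _ q1 rK iK) digit_sub.
  by rewrite (rsinv_rs _ q1 rK iK).
move/forallPn: H => [j]; rewrite -ltnNge => hj.
have -> : ('C(n, i))%:R = 0 :> R.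
  rewrite (@lucas R p m0 (n + i).+1 n i pp pc); last 2 first.
  - by apply: lt_pow => //; rewrite ltnW // ltnS leq_addr.
  - by apply: lt_pow => //; rewrite ltnW // ltnS leq_addl.
  by rewrite (bigD1 j) //= bin_small // mul0r.
by rewrite !mul0r.
Qed.

Unset Implicit Arguments.

Theorem proposition7p8 (R : comNzRingType) (p m0 : nat) (rho : nat -> nat) :
  prime p -> (0 < m0)%N -> p \in [pchar R] -> bijective rho ->
  (exists F : dps R -> dps R, is_rho_map (p ^ m0) rho F) /\
  (forall F : dps R -> dps R, is_rho_map (p ^ m0) rho F ->
     is_Ralg_automorphism F).
Proof.
move=> pp m1 pc [rinv rK iK]; have q1 := q_gt1 pp m1.
set q := (p ^ m0)%N in q1 *.
split.
  exists (fun a n => a (rsinv q rho rinv n)) => a i.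
  by rewrite (rsinv_rs _ q1 rK iK).
move=> F HF.
have FE : forall a n, F a n = a (rsinv q rho rinv n).
  by move=> a n; rewrite -{1}(rs_rsinv n q1 rK iK) HF.
split.
- by move=> a b; apply: functional_extensionality => n; rewrite /dps_add !FE.
- by move=> c a; apply: functional_extensionality => n; rewrite /dps_scale !FE.
- move=> a b; apply: functional_extensionality => N.
  rewrite FE -{2}(rs_rsinv N q1 rK iK).
  set n := rsinv q rho rinv N.
  rewrite /dps_mul.
  transitivity (\sum_(i < n.+1)
     (fun k => ('C(rho_star q rho n, k))%:R * F a k * F b (rho_star q rho n - k)%N)
       (rho_star q rho i)).
    apply: eq_bigr => i _ /=.
    by rewrite !FE (term_rs _ _ _ _ pp pc m1 rK iK).
  refine (@big_bij_reindex R 0 +%R (rho_star q rho) (rsinv q rho rinv)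
     (fun x => rsinv_rs x q1 rK iK) (fun x => rs_rsinv x q1 rK iK)
     (fun k => ('C(rho_star q rho n, k))%:R * F a k * F b (rho_star q rho n - k)%N)
     (rho_star q rho n).+1 n.+1 _ _) => [k hk|i hi] /=.
    by rewrite bin_small // !GRing.mul0r.
  rewrite !FE (term_rs _ _ _ _ pp pc m1 rK iK).
  by rewrite bin_small // !GRing.mul0r.
- apply: functional_extensionality => n; rewrite FE /dps_one.
  congr (_ %:R); congr nat_of_bool.
  apply/eqP/eqP => [h|->].
    by rewrite -(rs_rsinv n q1 rK iK) h (rs0 q1 rK iK).
  by rewrite -{1}(rs0 q1 rK iK) (rsinv_rs _ q1 rK iK).
- exists (fun a i => a (rho_star q rho i)) => a.
    by apply: functional_extensionality => i; rewrite HF.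
  by apply: functional_extensionality => n /=; rewrite FE (rs_rsinv _ q1 rK iK).
Qed.
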